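(* Let $f,g\in\mathcal{S}_d$ be such that $\hat{\mathbb{D}}_{\beta,d}(f,g)$ is finite for some $\beta>0$, and suppose that $S_f(x)\ll x^\alpha$. Then $S_g(x)\ll x^{\max(\alpha,\beta)}$.
   Context: $\mathcal{S}_d$ is the set of ''degree $d$'' multiplicative functions: those $f$ with $f=f_1*\cdots*f_d$, where each $f_i$ is a completely multiplicative function with $|f_i(n)|\le1$ for all $n$, and $(a*b)(n)=\sum_{dm=n}a(d)b(m)$. $S_f(x):=\sum_{n\le x}f(n)$. $\hat{\mathbb{D}}_{\beta,k}(f,g):=\sum_p\sum_{j=1}^k\frac{|f(p^j)-g(p^j)|}{p^{j\beta}}$ (sum over primes). *)

(* Defs.v *)
From HB Require Import structures.
From mathcomp Require Import all_boot all_order all_algebra.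
From mathcomp Require Import complex.
From mathcomp Require Import all_classical all_reals all_analysis.
Set Implicit Arguments. Unset Strict Implicit. Unset Printing Implicit Defensive.
Import Order.TTheory GRing.Theory Num.Theory ComplexField.
Local Open Scope ring_scope.

Section Defs.
Variable R : realType.

(* arithmetic functions: only the values at n >= 1 matter *)
Definition arith := nat -> R[i].

Definition dconv (a b : arith) : arith :=
  fun n => \sum_(k < n.+1 | (0 < k)%N && (k %| n)%N) a k * b (n %/ k)%N.

Definition dunit : arith := fun n => (n == 1)%:R.

Definition cmod (z : R[i]) : R := ComplexField.Normc.normc z.

Definition completely_multiplicative (f : arith) : Prop :=
  f 1 = 1 /\ forall m n, (0 < m)%N -> (0 < n)%N -> f (m * n) = f m * f n.

Definition in_S (d : nat) (f : arith) : Prop :=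
  exists F : 'I_d -> arith,
    (forall i, completely_multiplicative (F i)) /\
    (forall i n, (0 < n)%N -> cmod (F i n) <= 1) /\
    (forall n, (0 < n)%N -> f n = (\big[dconv/dunit]_(i < d) F i) n).

Definition Ssum (f : arith) (x : R) : R[i] :=
  \sum_(1 <= n < `|Num.floor x|%N.+1) f n.

Definition Dterm (beta : R) (k : nat) (f g : arith) (p : nat) : R :=
  \sum_(1 <= j < k.+1) cmod (f (p ^ j)%N - g (p ^ j)%N) / (p%:R `^ (j%:R * beta)).

(* the series over primes converges (nonnegative terms: bounded partial sums) *)
Definition Dhat_finite (beta : R) (k : nat) (f g : arith) : Prop :=
  exists M : R, forall N : nat, \sum_(p < N | prime p) Dterm beta k f g p <= M.

Definition Sbound (f : arith) (alpha : R) : Prop :=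
  exists C : R, forall x : R, 1 <= x -> cmod (Ssum f x) <= C * x `^ alpha.

End Defs.

(* Main.v *)
Require Import Defs.
From HB Require Import structures.
From mathcomp Require Import all_boot all_order all_algebra.
From mathcomp Require Import complex.
From mathcomp Require Import all_classical all_reals all_analysis.
From mathcomp Require Import ring lra.
Import Order.TTheory GRing.Theory Num.Theory ComplexField.
Local Open Scope ring_scope.

Set Implicit Arguments. Unset Strict Implicit. Unset Printing Implicit Defensive.


Section P1.
Variable R : realType.
Implicit Types u v : arith R.

Lemma dconv_divisors u v n : (0 < n)%N ->
  dconv u v n = \sum_(k <- divisors n) u k * v (n %/ k)%N.
Proof.
move=> n0; rewrite /dconv.
rewrite -(big_mkord (fun k => (0<k)%N && (k %| n)%N) (fun k => u k * v (n %/ k)%N)).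
rewrite -big_filter; apply: perm_big; apply: uniq_perm.
- by rewrite filter_uniq // iota_uniq.
- exact: divisors_uniq.
move=> k; rewrite mem_filter mem_iota -dvdn_divisors //.
apply/andP/idP => [[/andP[_ ->]]//|kn]; split.
  by rewrite (dvdn_gt0 n0 kn) kn.
by rewrite subn0 add0n ltnS leq0n /= dvdn_leq.
Qed.

Lemma dconv_pexp u v p m : prime p ->
  dconv u v (p ^ m)%N = \sum_(j < m.+1) u (p ^ j)%N * v (p ^ (m - j))%N.
Proof.
move=> pp; have p0 := prime_gt0 pp; have p1 := prime_gt1 pp.
rewrite dconv_divisors ?expn_gt0 ?p0 //.
rewrite (perm_big [seq (p ^ j)%N | j <- iota 0 m.+1]); last first.
  apply: uniq_perm; first exact: divisors_uniq.
    by rewrite map_inj_uniq ?iota_uniq //; apply: expnI.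
  move=> k; rewrite -dvdn_divisors ?expn_gt0 ?p0 //.
  apply/idP/mapP => [/(dvdn_pfactor _ _ pp)[j jm ->]|[j]].
    by exists j => //; rewrite mem_iota add0n ltnS.
  by rewrite mem_iota add0n ltnS => /andP[_ jm] ->; apply/dvdn_pfactor => //; exists j.
rewrite big_map -(big_mkord xpredT (fun j => u (p ^ j)%N * v (p ^ (m - j))%N)).
rewrite /index_iota subn0; apply: eq_big_seq => j; rewrite mem_iota add0n ltnS => /andP[_ jm].
by rewrite -expnB.
Qed.

Definition mult u := u 1%N = 1 /\
  forall m n, (0 < m)%N -> (0 < n)%N -> coprime m n -> u (m * n)%N = u m * u n.

Lemma cm_mult u : completely_multiplicative u -> mult u.
Proof. by case=> h1 hM; split=> // m n m0 n0 _; apply: hM. Qed.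

Lemma dunit_mult : mult (@dunit R).
Proof.
split; first by rewrite /dunit eqxx.
move=> m n m0 n0 _; rewrite /dunit muln_eq1.
by case: (m == 1%N); case: (n == 1%N); rewrite /= ?mulr1 ?mulr0 ?mul0r.
Qed.

Lemma gcd_split k m n : coprime m n -> (k %| m * n)%N ->
  k = (gcdn k m * gcdn k n)%N.
Proof.
move=> cmn kmn; apply/eqP; rewrite eqn_dvd; apply/andP; split.
  by rewrite muln_gcdl !muln_gcdr !dvdn_gcd kmn ?(dvdn_mulr _ (dvdnn k)) ?(dvdn_mull _ (dvdnn k)).
rewrite Gauss_dvd ?dvdn_gcdl //.
apply: (coprime_dvdl (dvdn_gcdr _ _)); apply: (coprime_dvdr (dvdn_gcdr _ _)).
exact: cmn.
Qed.

Lemma mult_dconv u v : mult u -> mult v -> mult (dconv u v).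
Proof.
move=> [u1 uM] [v1 vM]; split.
  rewrite dconv_divisors //.
  have -> : divisors 1 = [:: 1%N] by [].
  by rewrite big_seq1 u1 divn1 v1 mulr1.
move=> m n m0 n0 cmn.
rewrite !dconv_divisors ?muln_gt0 ?m0 //.
rewrite (perm_big [seq (a * b)%N | a <- divisors m, b <- divisors n]); last first.
  apply: uniq_perm; first exact: divisors_uniq.
    apply: allpairs_uniq; [exact: divisors_uniq | exact: divisors_uniq|].
    move=> [a1 b1] [a2 b2] /allpairsP[[x1 y1] /= [x1m y1n [-> ->]]].
    move=> /allpairsP[[x2 y2] /= [x2m y2n [-> ->]]] /= e.
    move: x1m y1n x2m y2n; rewrite -!dvdn_divisors // => x1m y1n x2m y2n.
    have ha : forall x y, (x %| m)%N -> (y %| n)%N -> gcdn m (x * y) = x.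
      move=> x y xm yn; rewrite Gauss_gcdl; first exact/gcdn_idPr.
      by apply: (coprime_dvdr yn).
    have ex : x1 = x2 by rewrite -(ha x1 y1) // e ha.
    subst x2; congr pair; apply/eqP; rewrite -(eqn_pmul2l (dvdn_gt0 m0 x1m)).
    by apply/eqP.
  move=> k; rewrite -dvdn_divisors ?muln_gt0 ?m0 //; apply/idP/allpairsP.
    move=> kmn; exists (gcdn k m, gcdn k n); rewrite /= -!dvdn_divisors //.
    by rewrite !dvdn_gcdr; split=> //; apply: gcd_split.
  move=> [[a b] /= [am bn ->]]; move: am bn; rewrite -!dvdn_divisors // => am bn.
  by rewrite dvdn_mul.
rewrite big_allpairs_dep /= big_distrl /=; apply: eq_big_seq => a.
rewrite -dvdn_divisors // => am.
rewrite big_distrr /=; apply: eq_big_seq => b; rewrite -dvdn_divisors // => bn.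
have a0 := dvdn_gt0 m0 am; have b0 := dvdn_gt0 n0 bn.
have cab : coprime a b by apply: (coprime_dvdl am); apply: (coprime_dvdr bn).
have e : ((m * n) %/ (a * b) = (m %/ a) * (n %/ b))%N.
  by rewrite -{1}(divnK am) -{1}(divnK bn) mulnACA mulnK ?muln_gt0 ?a0.
rewrite e uM // vM; first by rewrite mulrACA.
all: try by rewrite divn_gt0 // dvdn_leq.
by apply: (coprime_dvdl (dvdn_div am)); apply: (coprime_dvdr (dvdn_div bn)).
Qed.

End P1.


Section P2.
Variable R : realType.
Implicit Types u v : arith R.

Lemma logn_eq0 p n : ~~ prime p -> logn p n = 0%N.
Proof. by move=> np; apply/eqP; rewrite -leqn0 leqNgt logn_gt0 mem_primes (negbTE np). Qed.

Lemma logn_big p n : (0 < n)%N -> (n < p)%N -> logn p n = 0%N.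
Proof.
move=> n0 np; apply/eqP; rewrite -leqn0 leqNgt logn_gt0 mem_primes n0 /=.
apply/negP => /andP[_ pn]; move: (dvdn_leq n0 pn); rewrite leqNgt np.
by [].
Qed.

Lemma prod_logn n N : (0 < n)%N -> (n < N)%N ->
  (\prod_(p < N) p ^ logn p n)%N = n.
Proof.
move=> n0 nN; rewrite -{2}(partnT n0) /partn big_mkord.
rewrite (big_ord_widen N (fun p => p ^ logn p n)%N nN) [RHS]big_mkcond /=.
apply: eq_bigr => i _; case: ifP => // /negbT; rewrite -leqNgt => h.
by rewrite logn_big // expn0.
Qed.

Lemma mult_prod u n N : mult u -> (0 < n)%N ->
  u (\prod_(p < N) p ^ logn p n)%N = \prod_(p < N) u (p ^ logn p n)%N.
Proof.
move=> [u1 uM] n0; elim: N => [|N IH]; first by rewrite !big_ord0.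
rewrite !big_ord_recr /= -IH.
case: (posnP (logn N n)) => [->|lg]; first by rewrite expn0 muln1 u1 mulr1.
have pN : prime N by move: lg; rewrite logn_gt0 mem_primes => /andP[].
apply: uM; first by rewrite prodn_gt0 // => i; rewrite expn_gt0 prime_gt0 ?orbT.
  by rewrite expn_gt0 prime_gt0.
apply: (big_ind (fun x => coprime x (N ^ logn N n))); first exact: coprime1n.
  by move=> x y cx cy; rewrite coprimeMl cx cy.
move=> i _; case: (posnP (logn i n)) => [->|li]; first by rewrite expn0 coprime1n.
have pi : prime i by move: li; rewrite logn_gt0 mem_primes => /andP[].
rewrite coprime_pexpl // coprime_pexpr // prime_coprime // dvdn_prime2 //.
by rewrite neq_ltn ltn_ord.
Qed.

Lemma mult_factor u n N : mult u -> (0 < n)%N -> (n < N)%N ->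
  u n = \prod_(p < N) u (p ^ logn p n)%N.
Proof. by move=> mu n0 nN; rewrite -mult_prod // prod_logn. Qed.

Lemma mult_eq u v : mult u -> mult v ->
  (forall p e, prime p -> u (p ^ e)%N = v (p ^ e)%N) ->
  forall n, (0 < n)%N -> u n = v n.
Proof.
move=> mu mv h n n0; rewrite (mult_factor mu n0 (ltnSn n)) (mult_factor mv n0 (ltnSn n)).
apply: eq_bigr => i _; case: (boolP (prime i)) => [pi|npi]; first exact: h.
by rewrite logn_eq0 // expn0 mu.1 mv.1.
Qed.

End P2.


Section P3.
Variable R : realType.
Local Notation C := (R[i]).
Implicit Types u v : arith R.

Definition T1 (M : nat) (P : {poly C}) := forall k, (k <= M)%N -> P`_k = (k == 0%N)%:R.

Lemma T1_mul_r M P Q : T1 M Q -> forall k, (k <= M)%N -> (P * Q)`_k = P`_k.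
Proof.
move=> TQ k kM; rewrite coefM big_ord_recr /= subnn TQ // mulr1.
rewrite big1 ?add0r // => j _; rewrite TQ; last by rewrite (leq_trans (leq_subr _ _)).
by rewrite subn_eq0 leqNgt ltn_ord /= mulr0.
Qed.

Lemma T1_mul M P Q : T1 M P -> T1 M Q -> T1 M (P * Q).
Proof. by move=> TP TQ k kM; rewrite (T1_mul_r _ TQ) // TP. Qed.

Lemma T1_one M : T1 M 1.
Proof. by move=> k _; rewrite coef1. Qed.

Lemma T1_prod M I (r : seq I) (Pr : pred I) (F : I -> {poly C}) :
  (forall i, Pr i -> T1 M (F i)) -> T1 M (\prod_(i <- r | Pr i) F i).
Proof.
move=> h; apply: (big_ind (T1 M)); [exact: T1_one | exact: T1_mul | exact: h].
Qed.

Definition geomP (a : C) M : {poly C} := \poly_(j < M.+1) a ^+ j.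

Lemma T1_geom (a : C) M : T1 M ((1 - a%:P * 'X) * geomP a M).
Proof.
move=> k kM; rewrite mulrBl mul1r -mulrA coefB coefCM coefXM /geomP !coef_poly.
rewrite ltnS kM; case: k kM => [|k] kM /=; first by rewrite expr0 mulr0 subr0.
by rewrite ltnS (ltnW kM) exprS subrr.
Qed.

Lemma cm_pow (F : arith R) p j : (0 < p)%N -> completely_multiplicative F -> F (p ^ j)%N = F p ^+ j.
Proof.
move=> p0 [F1 FM]; elim: j => [|j IH]; first by rewrite expn0 F1 expr0.
by rewrite expnS FM ?expn_gt0 ?p0 // IH exprS.
Qed.

Lemma bigconv_pexp d (F : 'I_d -> arith R) p m M : prime p -> (m <= M)%N ->
  (forall i, completely_multiplicative (F i)) ->
  (\big[@dconv R/@dunit R]_(i < d) F i) (p ^ m)%N = (\prod_(i < d) geomP (F i p) M)`_m.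
Proof.
move=> pp; elim: d F m => [|d IH] F m mM Fcm.
  rewrite !big_ord0 coef1 /dunit.
  by rewrite -(@eqn_exp2l p m 0 (prime_gt1 pp)) expn0.
rewrite !big_ord_recl /= dconv_pexp // coefM; apply: eq_bigr => j _.
rewrite IH //; last by rewrite (leq_trans (leq_subr _ _) mM).
rewrite cm_pow ?prime_gt0 // /geomP coef_poly ltnS.
by rewrite (leq_trans _ mM) // -ltnS.
Qed.

End P3.


Section P4.
Variable R : realType.
Local Notation C := (R[i]).
Variable d : nat.
Variables F G : 'I_d -> arith R.
Hypothesis Fcm : forall i, completely_multiplicative (F i).
Hypothesis Gcm : forall i, completely_multiplicative (G i).

Definition bf := \big[@dconv R/@dunit R]_(i < d) F i.
Definition bg := \big[@dconv R/@dunit R]_(i < d) G i.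

Lemma mult_big (K : 'I_d -> arith R) : (forall i, completely_multiplicative (K i)) ->
  mult (\big[@dconv R/@dunit R]_(i < d) K i).
Proof.
move=> h; apply: (big_ind (@mult R)); [exact: dunit_mult | exact: mult_dconv |].
by move=> i _; apply: cm_mult.
Qed.

Lemma mult_bf : mult bf. Proof. exact: mult_big. Qed.
Lemma mult_bg : mult bg. Proof. exact: mult_big. Qed.

Definition Ef (p : nat) : {poly C} := \prod_(i < d) (1 - (F i p)%:P * 'X).
Definition Hp (p e : nat) : C := \sum_(k < e.+1) (Ef p)`_k * bg (p ^ (e - k))%N.
Definition h (n : nat) : C := \prod_(p < n.+1) Hp p (logn p n).

Lemma Ef0 p : (Ef p)`_0 = 1.
Proof.
rewrite /Ef coef0_prod; apply: big1 => i _.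
by rewrite coefB coef1 coefCM coefX mulr0 subr0.
Qed.

Lemma Hp0 p : Hp p 0 = 1.
Proof. by rewrite /Hp big_ord1 Ef0 mul1r subnn expn0 mult_bg.1. Qed.

Lemma h_ext n N : (0 < n)%N -> (n < N)%N -> h n = \prod_(p < N) Hp p (logn p n).
Proof.
move=> n0 nN; rewrite /h (big_ord_widen N (fun p => Hp p (logn p n)) nN).
rewrite [LHS]big_mkcond /=; apply: eq_bigr => i _; case: ifP => // /negbT.
by rewrite -leqNgt => h1; rewrite logn_big // Hp0.
Qed.

Lemma mult_h : mult h.
Proof.
split; first by rewrite /h big1 // => i _; rewrite logn1 Hp0.
move=> m n m0 n0 cmn.
have mn0 : (0 < m * n)%N by rewrite muln_gt0 m0.
rewrite (h_ext mn0 (ltnSn _)) (h_ext m0 (_ : m < (m * n).+1)%N); last first.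
  by rewrite ltnS leq_pmulr.
rewrite (h_ext n0 (_ : n < (m * n).+1)%N); last by rewrite ltnS leq_pmull.
rewrite -big_split /=; apply: eq_bigr => p _.
rewrite lognM //.
case: (posnP (logn p m)) => [->|lm]; first by rewrite add0n Hp0 mul1r.
case: (posnP (logn p n)) => [->|ln]; first by rewrite addn0 Hp0 mulr1.
move: lm ln; rewrite !logn_gt0 !mem_primes => /and3P[pp _ pm] /and3P[_ _ pn].
have := cmn; rewrite /coprime => /eqP c1.
have : (p %| gcdn m n)%N by rewrite dvdn_gcd pm pn.
by rewrite c1 dvdn1 => /eqP p1; move: pp; rewrite p1.
Qed.

Lemma h_pexp p j : prime p -> h (p ^ j)%N = Hp p j.
Proof.
move=> pp; have p0 := prime_gt0 pp.
rewrite (h_ext (_ : 0 < p ^ j)%N (_ : p ^ j < p ^ j + p.+1)%N); last first.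
  by rewrite addnS ltnS leq_addr.
  by rewrite expn_gt0 p0.
have pN : (p < p ^ j + p.+1)%N by rewrite addnS ltnS leq_addl.
rewrite (bigD1 (Ordinal pN)) //= big1 ?mulr1; last first.
  move=> q /eqP qp; rewrite lognX logn_prime //.
  by case: eqP => [e|]; [case: qp; apply: val_inj | rewrite muln0 Hp0].
by rewrite lognX logn_prime // eqxx muln1.
Qed.

Lemma local_conv p e : prime p ->
  \sum_(j < e.+1) Hp p j * bf (p ^ (e - j))%N = bg (p ^ e)%N.
Proof.
move=> pp.
pose Pf : {poly C} := \prod_(i < d) geomP (F i p) e.
pose Pg : {poly C} := \prod_(i < d) geomP (G i p) e.
have hf : forall k, (k <= e)%N -> bf (p ^ k)%N = Pf`_k.
  by move=> k ke; rewrite /bf; apply: bigconv_pexp.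
have hg : forall k, (k <= e)%N -> bg (p ^ k)%N = Pg`_k.
  by move=> k ke; rewrite /bg; apply: bigconv_pexp.
have hH : forall j, (j <= e)%N -> Hp p j = (Ef p * Pg)`_j.
  move=> j je; rewrite /Hp coefM; apply: eq_bigr => k _.
  by rewrite hg // (leq_trans (leq_subr _ _) je).
have T : T1 e (Ef p * Pf).
  rewrite /Ef /Pf -big_split /=; apply: T1_prod => i _; exact: T1_geom.
transitivity (((Ef p * Pg) * Pf)`_e).
  rewrite coefM; apply: eq_bigr => j _.
  rewrite hH; last by rewrite -ltnS.
  by rewrite hf // leq_subr.
by rewrite mulrAC mulrC (T1_mul_r _ T) // hg.
Qed.

Lemma conv_hf n : (0 < n)%N -> dconv h bf n = bg n.
Proof.
apply: mult_eq; [exact: mult_dconv mult_h mult_bf | exact: mult_bg |].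
by move=> p e pp; rewrite dconv_pexp //; under eq_bigr do rewrite h_pexp //; apply: local_conv.
Qed.

End P4.


Section P5.
Variable R : realType.
Local Notation C := (R[i]).

Lemma cmod_ge0 (z : C) : 0 <= cmod z.
Proof. by case: z => a b; rewrite /cmod /= sqrtr_ge0. Qed.

Lemma cmodD (a b : C) : cmod (a + b) <= cmod a + cmod b.
Proof. exact: (@le_normcD R a b). Qed.

Lemma cmodM (a b : C) : cmod (a * b) = cmod a * cmod b.
Proof. exact: Normc.normcM. Qed.

Lemma cmodN (a : C) : cmod (- a) = cmod a.
Proof. exact: (@normcN R a). Qed.

Lemma cmod0 : cmod (0 : C) = 0. Proof. exact: Normc.normc0. Qed.
Lemma cmod1 : cmod (1 : C) = 1. Proof. exact: Normc.normc1. Qed.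

Lemma cmodX (a : C) k : cmod (a ^+ k) = cmod a ^+ k.
Proof. by elim: k => [|k IH]; rewrite ?expr0 ?cmod1 // !exprS cmodM IH. Qed.

Lemma cmod_sum I (r : seq I) (P : pred I) (f : I -> C) :
  cmod (\sum_(i <- r | P i) f i) <= \sum_(i <- r | P i) cmod (f i).
Proof.
elim/big_rec2: _ => [|i y1 y2 _ IH]; first by rewrite cmod0.
by apply: le_trans (cmodD _ _) _; rewrite lerD2l.
Qed.

Lemma cmodB (a b : C) : cmod (a - b) = cmod (b - a).
Proof. by rewrite -cmodN opprB. Qed.

Lemma cmod_b (b : bool) : cmod (b%:R : C) = b%:R.
Proof. by case: b; rewrite ?cmod1 ?cmod0. Qed.

Definition Sx (x : R) (M : nat) (P : {poly C}) : R :=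
  \sum_(k < M.+1) cmod P`_k * x ^+ k.

Lemma Sx_ge0 x M P : 0 <= x -> 0 <= Sx x M P.
Proof. by move=> x0; apply: sumr_ge0 => k _; rewrite mulr_ge0 ?exprn_ge0 ?cmod_ge0. Qed.

Lemma tri_sum (A : nat -> nat -> R) M :
  \sum_(k < M.+1) \sum_(j < k.+1) A j (k - j)%N =
  \sum_(j < M.+1) \sum_(l < M.+1 - j) A j l.
Proof.
elim: M => [|M IH]; first by rewrite !big_ord1 /= subnn.
rewrite big_ord_recr /= IH [RHS]big_ord_recr /= subSnn big_ord1.
rewrite [in RHS](eq_bigr (fun j : 'I_M.+1 => \sum_(l < M.+1 - j) A j l + A j (M.+1 - j)%N)); last first.
  move=> j _; rewrite (@subSn j M.+1); last by rewrite ltnW.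
  by rewrite big_ord_recr.
rewrite big_split /= -addrA; congr (_ + _).
by rewrite big_ord_recr /= subnn.
Qed.

Lemma Sx_mul x M P Q : 0 <= x -> Sx x M (P * Q) <= Sx x M P * Sx x M Q.
Proof.
move=> x0; rewrite /Sx.
apply: (@le_trans _ _ (\sum_(k < M.+1) \sum_(j < k.+1)
   ((cmod P`_j * x ^+ j) * (cmod Q`_(k - j) * x ^+ (k - j))))).
  apply: ler_sum => k _; rewrite coefM.
  apply: le_trans (ler_wpM2r (exprn_ge0 _ x0) (cmod_sum _ _ _)) _.
  rewrite mulr_suml; apply: ler_sum => j _; rewrite cmodM.
  by rewrite mulrACA -exprD subnKC // -ltnS.
have E := tri_sum (fun j l => (cmod P`_j * x ^+ j) * (cmod Q`_l * x ^+ l)) M.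
rewrite /= in E; rewrite E.
rewrite mulr_suml; apply: ler_sum => j _; rewrite mulr_sumr.
rewrite (big_ord_widen (M.+1) (fun l => cmod P`_j * x ^+ j * (cmod Q`_l * x ^+ l))) ?leq_subr //.
rewrite [X in X <= _]big_mkcond /=; apply: ler_sum => l _; case: ifP => // _.
by rewrite mulr_ge0 // mulr_ge0 ?exprn_ge0 ?cmod_ge0.
Qed.

End P5.
Arguments cmod0 {R}. Arguments cmod1 {R}.



Section P6.
Variable R : realType.
Local Notation C := (R[i]).

Lemma Sx_one (x : R) M : Sx x M 1 = 1.
Proof.
rewrite /Sx big_ord_recl /= coef1 cmod1 expr0 mulr1 big1 ?addr0 // => k _.
by rewrite coef1 /bump leq0n add1n cmod_b /= ?mulr0n mul0r.
Qed.

Lemma Sx_prod (x : R) M n (P : 'I_n -> {poly C}) : 0 <= x ->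
  Sx x M (\prod_(i < n) P i) <= \prod_(i < n) Sx x M (P i).
Proof.
move=> x0; elim: n P => [|n IH] P; first by rewrite !big_ord0 Sx_one.
rewrite !big_ord_recr /=; apply: le_trans (Sx_mul _ _ _ x0) _.
by apply: ler_wpM2r; [exact: Sx_ge0 | exact: IH].
Qed.

Lemma geom_le (x : R) n : 0 <= x -> x < 1 -> \sum_(k < n) x ^+ k <= (1 - x)^-1.
Proof.
move=> x0 x1; have h : 0 < 1 - x by rewrite subr_gt0.
have e : \sum_(k < n) x ^+ k = (1 - x ^+ n) / (1 - x).
  elim: n => [|n IH]; first by rewrite big_ord0 expr0 subrr mul0r.
  rewrite big_ord_recr /= IH; apply: (mulIf (lt0r_neq0 h)).
  rewrite mulrDl !mulfVK ?lt0r_neq0 // exprS; ring.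
rewrite e ler_pdivrMr // mulVf ?lt0r_neq0 // gerBl exprn_ge0 //.
Qed.

Lemma Sx_geom (x : R) M M' (a : C) : 0 <= x -> x < 1 -> cmod a <= 1 ->
  Sx x M (geomP a M') <= (1 - x)^-1.
Proof.
move=> x0 x1 a1; apply: le_trans (geom_le M.+1 x0 x1); apply: ler_sum => k _.
rewrite /geomP coef_poly; case: ifP => _; last by rewrite cmod0 mul0r exprn_ge0.
rewrite cmodX ler_piMl ?exprn_ge0 // exprn_ile1 ?cmod_ge0 //.
Qed.

Lemma Sx_lin (x : R) M (P : {poly C}) : 0 <= x -> (forall k, (1 < k)%N -> P`_k = 0) ->
  Sx x M P <= cmod P`_0 + cmod P`_1 * x.
Proof.
move=> x0 hP; rewrite /Sx big_ord_recl /= expr0 mulr1 lerD2l.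
case: M => [|M]; first by rewrite big_ord0 mulr_ge0 ?cmod_ge0.
rewrite big_ord_recl /= expr1 big1 ?addr0 // => k _.
by rewrite hP ?cmod0 ?mul0r.
Qed.

Lemma Sx_eq (x : R) M (P Q : {poly C}) : (forall k, (k <= M)%N -> P`_k = Q`_k) ->
  Sx x M P = Sx x M Q.
Proof. by move=> h; apply: eq_bigr => k _; rewrite h // -ltnS. Qed.

Definition Zd (a : nat) (P : {poly C}) := forall k, (a < k)%N -> P`_k = 0.

Lemma Z_mul a b c P Q : Zd a P -> Zd b Q -> (a + b <= c)%N -> Zd c (P * Q).
Proof.
move=> hP hQ abc k k_gt'; have k_gt := leq_ltn_trans abc k_gt'; rewrite coefM big1 // => j _.
case: (ltnP a j) => aj; first by rewrite hP ?mul0r.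
rewrite hQ ?mulr0 //; rewrite ltn_subRL.
by apply: leq_ltn_trans k_gt; rewrite leq_add2r.
Qed.

Lemma Z_prod n (P : 'I_n -> {poly C}) : (forall i, Zd 1 (P i)) -> Zd n (\prod_(i < n) P i).
Proof.
elim: n P => [|n IH] P h; first by rewrite big_ord0 => k k0; rewrite coef1; case: k k0.
rewrite big_ord_recr /=; apply: Z_mul; [exact: IH | exact: h | by rewrite addn1].
Qed.

Lemma Z_lin (a : C) : Zd 1 (1 - a%:P * 'X).
Proof.
move=> k k1; rewrite coefB coef1 coefCM coefX.
by case: k k1 => [|[|k]] //= _; rewrite mulr0 subr0.
Qed.

Lemma Sx_trunc (x : R) M a (P : {poly C}) : Zd a P -> (a <= M)%N -> Sx x M P = Sx x a P.
Proof.
move=> hP aM; rewrite /Sx [RHS](big_ord_widen M.+1 (fun k => cmod P`_k * x ^+ k)) //.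
rewrite [RHS]big_mkcond /=; apply: eq_bigr => k _; case: ifP => // /negbT.
by rewrite -leqNgt => ak; rewrite hP ?cmod0 ?mul0r.
Qed.

Lemma Sx_E (x : R) M n (a : 'I_n -> C) : 0 <= x -> x < 1 -> (forall i, cmod (a i) <= 1) ->
  Sx x M (\prod_(i < n) (1 - (a i)%:P * 'X)) <= 2 ^+ n.
Proof.
move=> x0 x1 ha; apply: le_trans; first exact: Sx_prod.
have -> : (2 : R) ^+ n = \prod_(i < n) (2 : R) by rewrite prodr_const card_ord.
apply: ler_prod => i _.
rewrite Sx_ge0 //=; apply: le_trans; first exact: (Sx_lin _ x0 (Z_lin _)).
rewrite coefB coef1 coefCM coefX /= mulr0 subr0 cmod1 coefB coef1 coefCM coefX /= mulr1 sub0r cmodN.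
by rewrite lerD2l mulr_ile1 ?cmod_ge0 // ltW.
Qed.

End P6.



Section P7.
Variable R : realType.
Local Notation C := (R[i]).
Variable d : nat.
Variables F G : 'I_d -> arith R.
Hypothesis Fcm : forall i, completely_multiplicative (F i).
Hypothesis Gcm : forall i, completely_multiplicative (G i).
Hypothesis Fb : forall i n, (0 < n)%N -> cmod (F i n) <= 1.
Hypothesis Gb : forall i n, (0 < n)%N -> cmod (G i n) <= 1.

Lemma local_bound p M (x : R) : prime p -> 0 <= x -> x < 1 -> (d <= M)%N ->
  \sum_(e < M.+1) cmod (Hp F G p e) * x ^+ e <=
  1 + 2 ^+ d * 2 ^+ d * ((1 - x)^-1) ^+ d *
      \sum_(1 <= j < d.+1) cmod (bf F (p ^ j)%N - bg G (p ^ j)%N) * x ^+ j.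
Proof.
move=> pp x0 x1 dM; have p0 := prime_gt0 pp.
pose Pg : {poly C} := \prod_(i < d) geomP (G i p) M.
pose Eg : {poly C} := \prod_(i < d) (1 - (G i p)%:P * 'X).
have TG : T1 M (Eg * Pg).
  by rewrite /Eg /Pg -big_split /=; apply: T1_prod => i _; exact: T1_geom.
have hH : forall e, (e <= M)%N -> Hp F G p e = ((Ef F p - Eg) * Pg)`_e + (e == 0%N)%:R.
  move=> e eM; rewrite mulrBl coefB -(TG e eM) subrK /Hp coefM.
  apply: eq_bigr => k _; congr (_ * _); rewrite /bg /Pg; apply: bigconv_pexp => //.
  by rewrite (leq_trans (leq_subr _ _) eM).
apply: (@le_trans _ _ (Sx x M ((Ef F p - Eg) * Pg) + 1)).
  rewrite /Sx [X in _ <= _ + X](_ : 1 = \sum_(e < M.+1) ((e : nat) == 0%N)%:R * x ^+ e); last first.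
    rewrite big_ord_recl /= expr0 mulr1 big1 ?addr0 // => k _.
    by rewrite /bump leq0n add1n /= mul0r.
  rewrite -big_split /=; apply: ler_sum => e _; rewrite hH; last by rewrite -ltnS.
  rewrite -mulrDl.
  apply: ler_wpM2r; first exact: exprn_ge0.
  by apply: le_trans (cmodD _ _) _; rewrite cmod_b.
rewrite addrC lerD2l.
apply: le_trans; first exact: Sx_mul.
have SPg : Sx x M Pg <= ((1 - x)^-1) ^+ d.
  apply: le_trans; first exact: Sx_prod.
  have -> : ((1 - x)^-1) ^+ d = \prod_(i < d) (1 - x)^-1 by rewrite prodr_const card_ord.
  apply: ler_prod => i _; rewrite Sx_ge0 //=; apply: Sx_geom => //.
  by apply: Gb.
have ZE : Zd d (Ef F p - Eg).
  move=> k dk; rewrite coefB (Z_prod (fun i => Z_lin (F i p))) //.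
  by rewrite (Z_prod (fun i => Z_lin (G i p))) // subrr.
rewrite (Sx_trunc _ ZE dM).
pose Pf' : {poly C} := \prod_(i < d) geomP (F i p) d.
pose Pg' : {poly C} := \prod_(i < d) geomP (G i p) d.
have TF' : T1 d (Ef F p * Pf').
  by rewrite /Ef /Pf' -big_split /=; apply: T1_prod => i _; exact: T1_geom.
have TG' : T1 d (Eg * Pg').
  by rewrite /Eg /Pg' -big_split /=; apply: T1_prod => i _; exact: T1_geom.
have -> : Sx x d (Ef F p - Eg) = Sx x d (Ef F p * Eg * (Pg' - Pf')).
  apply: Sx_eq => k kd.
  have -> : Ef F p * Eg * (Pg' - Pf') = Ef F p * (Eg * Pg') - Eg * (Ef F p * Pf') by ring.
  by rewrite !coefB (T1_mul_r _ TG') // (T1_mul_r _ TF').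
have SD : Sx x d (Pg' - Pf') =
    \sum_(1 <= j < d.+1) cmod (bf F (p ^ j)%N - bg G (p ^ j)%N) * x ^+ j.
  rewrite /Sx big_ord_recl /= coefB /Pg' /Pf'.
  rewrite -(bigconv_pexp pp (leq0n d) Gcm) -(bigconv_pexp pp (leq0n d) Fcm).
  rewrite -/(bg G _) -/(bf F _) expn0 (mult_bg Gcm).1 (mult_bf Fcm).1 subrr cmod0 mul0r add0r.
  rewrite big_add1 /= big_mkord; apply: eq_bigr => k _.
  rewrite /bump leq0n add1n coefB -(bigconv_pexp pp _ Gcm) ?ltn_ord //.
  by rewrite -(bigconv_pexp pp _ Fcm) ?ltn_ord // cmodB.
have SE : forall (K : 'I_d -> arith R), (forall i n, (0 < n)%N -> cmod (K i n) <= 1) ->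
    Sx x d (\prod_(i < d) (1 - (K i p)%:P * 'X)) <= 2 ^+ d.
  by move=> K hK; apply: Sx_E => // i; apply: hK.
apply: (@le_trans _ _ ((2 ^+ d * 2 ^+ d * Sx x d (Pg' - Pf')) * Sx x M Pg)).
  apply: ler_wpM2r; first exact: Sx_ge0.
  apply: le_trans; first exact: Sx_mul.
  apply: ler_wpM2r; first exact: Sx_ge0.
  apply: le_trans; first exact: Sx_mul.
  apply: ler_pM; rewrite ?Sx_ge0 //; first exact: SE.
  by apply: SE.
have SDge : 0 <= Sx x d (Pg' - Pf') by apply: Sx_ge0.
have -> : forall a b c s : R, a * b * s * c = a * b * c * s by move=> *; ring.
rewrite -SD; apply: ler_wpM2r => //; apply: ler_wpM2l => //.
Qed.

End P7.



Section P8a.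
Variable R : realType.
Local Notation C := (R[i]).

Lemma cmod_prod I (r : seq I) (P : pred I) (f : I -> C) :
  cmod (\prod_(i <- r | P i) f i) = \prod_(i <- r | P i) cmod (f i).
Proof.
elim/big_rec2: _ => [|i y1 y2 _ IH]; first by rewrite cmod1.
by rewrite cmodM IH.
Qed.

Lemma powR_prod n (a : 'I_n -> R) (b : R) : (forall i, 0 <= a i) ->
  (\prod_(i < n) a i) `^ b = \prod_(i < n) (a i `^ b).
Proof.
elim: n a => [|n IH] a ha; first by rewrite !big_ord0 powR1.
rewrite !big_ord_recr /= powRM; first by rewrite IH // => i; apply: ha.
  by apply: prodr_ge0 => i _; apply: ha.
exact: ha.
Qed.

Lemma powR_exp (a b : R) e : 0 <= a -> (a ^+ e) `^ b = (a `^ b) ^+ e.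
Proof.
move=> a0; rewrite -powR_mulrn // -powRrM mulrC powRrM powR_mulrn //.
exact: powR_ge0.
Qed.

End P8a.

Section P8.
Variable R : realType.
Local Notation C := (R[i]).
Variable d : nat.
Variables F G : 'I_d -> arith R.
Hypothesis Fcm : forall i, completely_multiplicative (F i).
Hypothesis Gcm : forall i, completely_multiplicative (G i).
Hypothesis Fb : forall i n, (0 < n)%N -> cmod (F i n) <= 1.
Hypothesis Gb : forall i n, (0 < n)%N -> cmod (G i n) <= 1.
Variables (f g : arith R) (beta : R).
Hypothesis hf : forall n, (0 < n)%N -> f n = bf F n.
Hypothesis hg : forall n, (0 < n)%N -> g n = bg G n.
Hypothesis bpos : 0 < beta.

Definition xp (p : nat) : R := ((p%:R : R) `^ beta)^-1.
Definition w (p e : nat) : R :=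
  if prime p then cmod (Hp F G p e) * xp p ^+ e else (e == 0%N)%:R.
Definition x0 : R := (2%:R `^ beta)^-1.
Definition K0 : R := 2 ^+ d * 2 ^+ d * ((1 - x0)^-1) ^+ d.

Lemma K0_ge0 : 0 <= K0.
Proof.
rewrite /K0 !mulr_ge0 ?exprn_ge0 // invr_ge0 subr_ge0 /x0 invf_le1 ?powR_gt0 //.
have := @gt0_ltr_powR R beta bpos 1 2%:R; rewrite powR1 => h1.
by rewrite ltW // h1 ?nnegrE ?ler0n ?ltr1n.
Qed.

Lemma xp_bounds p : prime p -> [/\ 0 <= xp p, xp p <= x0 & x0 < 1].
Proof.
move=> pp; have p2 : (2 <= p)%N := prime_gt1 pp.
have h1 : 1 < (2%:R : R) `^ beta.
  have := @gt0_ltr_powR R beta bpos 1 2%:R; rewrite powR1 => h1.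
  by rewrite h1 ?nnegrE ?ler0n ?ltr1n.
split.
- by rewrite /xp invr_ge0 powR_ge0.
- rewrite /xp /x0 lef_pV2 ?posrE ?powR_gt0 ?ltr0n ?(leq_trans _ p2) //.
  by apply: ge0_ler_powR; rewrite ?nnegrE ?ler0n ?ler_nat // ltW.
- by rewrite /x0 invf_lt1 // powR_gt0 // ltr0n.
Qed.

Lemma Dterm_eq p : prime p ->
  Dterm beta d f g p = \sum_(1 <= j < d.+1) cmod (bf F (p ^ j)%N - bg G (p ^ j)%N) * xp p ^+ j.
Proof.
move=> pp; rewrite /Dterm; apply: eq_big_nat => j _.
rewrite hf ?hg ?expn_gt0 ?prime_gt0 //; congr (_ * _).
rewrite /xp exprVn mulrC powRrM powR_mulrn //; exact: powR_ge0.
Qed.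

Lemma factor_bound p N : (d <= N)%N ->
  \sum_(e < N.+1) w p e <= 1 + K0 * (if prime p then Dterm beta d f g p else 0).
Proof.
move=> dN; rewrite /w; have [pp|np] := boolP (prime p); rewrite ?(negbTE np) ?pp /=; last first.
  rewrite mulr0 addr0 big_ord_recl /= big1 ?addr0 // => k _.
have [x_ge0 x_le x0_lt] := xp_bounds pp.
apply: le_trans; first exact: (local_bound Fcm Gcm Fb Gb pp x_ge0 (le_lt_trans x_le x0_lt) dN).
rewrite lerD2l Dterm_eq //; apply: ler_wpM2r.
  by apply: sumr_ge0 => j _; rewrite mulr_ge0 ?cmod_ge0 ?exprn_ge0.
rewrite /K0 ler_wpM2l ?mulr_ge0 ?exprn_ge0 //; apply: lerXn2r.
- by rewrite nnegrE invr_ge0 subr_ge0 (le_trans x_le) // ltW.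
- by rewrite nnegrE invr_ge0 subr_ge0 ltW.
rewrite lef_pV2 ?posrE ?subr_gt0 ?(le_lt_trans x_le) //.
by rewrite lerD2l lerN2.
Qed.

Lemma term_eq n N : (0 < n)%N -> (n < N.+1)%N ->
  cmod (h F G n) * ((n%:R : R) `^ beta)^-1 = \prod_(p < N.+1) w p (logn p n).
Proof.
move=> n0 nN; rewrite (h_ext F Gcm n0 nN) cmod_prod.
rewrite -{2}(prod_logn n0 nN) natr_prod powR_prod; last by move=> i; rewrite ler0n.
rewrite -prodfV -big_split /=; apply: eq_bigr => p _.
rewrite /w natrX powR_exp ?ler0n // -exprVn; case: ifP => // /negbT np.
by rewrite logn_eq0 // Hp0 // cmod1 expr0 mulr1.
Qed.

Lemma w_ge0 p e : 0 <= w p e.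
Proof.
rewrite /w; case: ifP => pp; last exact: ler0n.
by rewrite mulr_ge0 ?cmod_ge0 ?exprn_ge0 //; case: (xp_bounds pp).
Qed.

Lemma logn_lt p n : (0 < n)%N -> (logn p n < n.+1)%N.
Proof.
move=> n0; case: (boolP (prime p)) => pp; last by rewrite logn_eq0.
rewrite ltnS; apply: leq_trans (dvdn_leq n0 (pfactor_dvdnn p n)).
exact: ltnW (ltn_expl _ (prime_gt1 pp)).
Qed.

Variable Mb : R.
Hypothesis DM : forall N, \sum_(p < N | prime p) Dterm beta d f g p <= Mb.

Lemma euler N : (d <= N)%N ->
  \sum_(n < N.+1 | (0 < n)%N) cmod (h F G n) * ((n%:R : R) `^ beta)^-1 <= expR (K0 * Mb).
Proof.
move=> dN.
pose W (phi : {ffun 'I_N.+1 -> 'I_N.+1}) := \prod_(p < N.+1) w p (phi p).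
pose phi (n : 'I_N.+1) := [ffun p : 'I_N.+1 => (inord (logn p n) : 'I_N.+1)].
have E1 : forall n : 'I_N.+1, (0 < n)%N ->
    cmod (h F G n) * ((n%:R : R) `^ beta)^-1 = W (phi n).
  move=> n n0; rewrite (term_eq n0 (ltn_ord n)) /W; apply: eq_bigr => p _.
  rewrite ffunE inordK //; apply: leq_trans (logn_lt p n0) _.
  by rewrite ltnS -ltnS ltn_ord.
rewrite (eq_bigr (fun n => W (phi n))); last by move=> n n0; exact: E1.
have injphi : {in [pred n : 'I_N.+1 | (0 < n)%N] &, injective phi}.
  move=> n1 n2; rewrite !inE => n10 n20 e; apply: val_inj => /=.
  rewrite -(prod_logn n10 (ltn_ord n1)) -(prod_logn n20 (ltn_ord n2)).
  apply: eq_bigr => p _; congr (_ ^ _)%N.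
  have := congr1 (fun f0 : {ffun 'I_N.+1 -> 'I_N.+1} => nat_of_ord (f0 p)) e; rewrite /= !ffunE !inordK //.
    by apply: leq_trans (logn_lt p n20) _; rewrite ltnS -ltnS ltn_ord.
  by apply: leq_trans (logn_lt p n10) _; rewrite ltnS -ltnS ltn_ord.
apply: (@le_trans _ _ (\sum_(phi0 : {ffun 'I_N.+1 -> 'I_N.+1}) W phi0)).
  rewrite (eq_bigl (fun n : 'I_N.+1 => n \in [pred n : 'I_N.+1 | (0 < n)%N])); last by move=> n; rewrite inE.
  rewrite -(big_imset _ injphi) /=.
  rewrite [X in _ <= X](bigID [pred phi0 | phi0 \in phi @: [pred n : 'I_N.+1 | (0 < n)%N]]) /=.
  rewrite lerDl; apply: sumr_ge0 => phi0 _; apply: prodr_ge0 => p _; exact: w_ge0.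
have -> : \sum_(phi0 : {ffun 'I_N.+1 -> 'I_N.+1}) W phi0 = \prod_(p < N.+1) \sum_(e < N.+1) w p e.
  by rewrite bigA_distr_bigA.
apply: (@le_trans _ _ (\prod_(p < N.+1) (1 + K0 * (if prime p then Dterm beta d f g p else 0)))).
  apply: ler_prod => p _; rewrite sumr_ge0 /=; last by move=> e _; exact: w_ge0.
  exact: factor_bound.
apply: (@le_trans _ _ (\prod_(p < N.+1) expR (K0 * (if prime p then Dterm beta d f g p else 0)))).
  apply: ler_prod => p _; rewrite expR_ge1Dx andbT.
  case: ifP => pp; last by rewrite mulr0 addr0.
  rewrite addr_ge0 // mulr_ge0 ?K0_ge0 //.
  by rewrite /Dterm; apply: sumr_ge0 => j _; rewrite divr_ge0 ?cmod_ge0 ?powR_ge0.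
rewrite -expR_sum ler_expR -mulr_sumr ler_wpM2l ?K0_ge0 //.
by rewrite -big_mkcond /=; apply: DM.
Qed.

End P8.



Section P9a.
Variable R : realType.
Local Notation C := (R[i]).
Implicit Types u v : arith R.

Definition Sv v m : C := \sum_(1 <= b < m.+1) v b.

Lemma dconv_nat u v X :
  dconv u v X.+1 = \sum_(1 <= k < X.+1) (if (k %| X.+1)%N then u k * v (X.+1 %/ k)%N else 0)
     + u X.+1 * v 1%N.
Proof.
rewrite /dconv big_mkcond -(big_mkord xpredT (fun k => if (0 < k)%N && (k %| X.+1)%N then u k * v (X.+1 %/ k)%N else 0)).
rewrite big_ltn // /= add0r big_nat_recr //= dvdnn divnn /=.
congr (_ + _); apply: eq_big_nat => k /andP[k1 _].
by rewrite k1.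
Qed.

Lemma sum_dconv u v X :
  \sum_(1 <= n < X.+1) dconv u v n = \sum_(1 <= a < X.+1) u a * Sv v (X %/ a)%N.
Proof.
elim: X => [|X IH]; first by rewrite !big_geq.
rewrite big_nat_recr //= IH dconv_nat [RHS]big_nat_recr //= divnn /=.
have -> : Sv v 1 = v 1%N by rewrite /Sv big_nat1.
rewrite addrA; congr (_ + _).
rewrite -big_split /=; apply: eq_big_nat => a /andP[a1 _].
rewrite divnS //; case: ifP => ad /=; last by rewrite add0n addr0.
by rewrite add1n /Sv [in RHS]big_nat_recr //= mulrDr ad add1n.
Qed.

Lemma floor_nat (y : R) : 0 <= y ->
  ((`|Num.floor y|%N)%:R <= y) /\ (y < (`|Num.floor y|%N).+1%:R).
Proof.
move=> y0; have f0 : 0 <= Num.floor y by rewrite Num.Theory.floor_ge0.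
set X := `|Num.floor y|%N.
have e : Num.floor y = X%:Z by rewrite /X gez0_abs.
have := Num.Theory.floor_itv y; rewrite e => /andP[h1 h2]; split => //.
by move: h2; rewrite intrD -natr1.
Qed.

Lemma floor_div (x : R) a : 0 <= x -> (0 < a)%N ->
  `|Num.floor (x / a%:R)|%N = (`|Num.floor x|%N %/ a)%N.
Proof.
move=> x0 a0; have [h1 h2] := floor_nat x0; set X := `|Num.floor x|%N in h1 h2 *.
have a0' : (0 : R) < a%:R by rewrite ltr0n.
suff -> : Num.floor (x / a%:R) = (X %/ a)%N%:Z by [].
have c : forall n : nat, ((n%:Z)%:~R : R) = n%:R by [].
apply: Num.Theory.floor_def; apply/andP; split.
  rewrite c ler_pdivlMr // -natrM (le_trans _ h1) // ler_nat.
  exact: leq_trunc_div.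
rewrite intrD c natr1 ltr_pdivrMr // -natrM (lt_le_trans h2) // ler_nat.
exact: ltn_ceil.
Qed.

End P9a.

Lemma powR_invb (R : realType) (a r : R) : 0 <= a -> (a^-1) `^ r = (a `^ r)^-1.
Proof. by move=> a0; rewrite -powR_inv1 // -powRrM mulN1r powRN. Qed.

Unset Implicit Arguments.
Unset Strict Implicit.

Theorem theorem4 (R : realType) (d : nat) (f g : arith R) (alpha beta : R) :
  in_S d f -> in_S d g -> 0 < beta -> Dhat_finite beta d f g ->
  Sbound f alpha -> Sbound g (Num.max alpha beta).
Proof.
move=> [F [Fcm [Fb hf]]] [G [Gcm [Gb hg]]] bpos [Mb DM] [C hC].
set gam := Num.max alpha beta.
have C0 : 0 <= C.
  have := hC 1 (lexx 1); rewrite powR1 /= mulr1 => h1.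
  exact: le_trans (cmod_ge0 _) h1.
set K := expR (K0 d beta * Mb).
have hE : forall X, \sum_(1 <= a < X.+1) cmod (h F G a) * ((a%:R : R) `^ beta)^-1 <= K.
  move=> X; apply: le_trans (euler Fcm Gcm Fb Gb hf hg bpos DM (leq_addl X d)).
  rewrite big_geq_mkord (big_ord_widen_cond (X + d).+1 (fun i => true && (0 < i)%N) (fun i => cmod (h F G i) / (i%:R : R) `^ beta)); last by rewrite ltnS leq_addr.
  rewrite big_mkcond [X in _ <= X]big_mkcond /=; apply: ler_sum => a _.
  case: ifP => [/andP[a0 _]|_]; first by rewrite a0.
  by case: ifP => // _; rewrite mulr_ge0 ?cmod_ge0 // invr_ge0 powR_ge0.
exists (C * K) => x x1.
have x0 : 0 <= x by apply: le_trans x1.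
have [hX1 hX2] := floor_nat x0.
rewrite /Ssum; set X := `|Num.floor x|%N in hX1 hX2 *.
have eg : forall n, (0 < n)%N -> g n = dconv (h F G) (bf F) n.
  by move=> n n0; rewrite hg // (conv_hf Fcm Gcm).
rewrite (@eq_big_nat _ _ _ 1 X.+1 g (fun n => dconv (h F G) (bf F) n)); last first.
  by move=> n /andP[n1 _]; apply: eg.
rewrite sum_dconv; apply: le_trans; first exact: cmod_sum.
apply: (@le_trans _ _ (\sum_(1 <= a < X.+1) (C * x `^ gam) * (cmod (h F G a) * ((a%:R : R) `^ beta)^-1))).
  apply: ler_sum_nat => a /andP[a1 aX]; rewrite cmodM.
  have a0 : (0 : R) < a%:R by rewrite ltr0n.
  have ax : (a%:R : R) <= x by apply: le_trans hX1; rewrite ler_nat -ltnS.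
  have xa1 : 1 <= x / a%:R by rewrite ler_pdivlMr // mul1r.
  have eS : Sv (bf F) (X %/ a)%N = Ssum f (x / a%:R).
    rewrite /Ssum floor_div //; apply: eq_big_nat => b /andP[b1 _].
    by rewrite hf.
  rewrite eS.
  have -> : C * x `^ gam * (cmod (h F G a) / a%:R `^ beta) =
     cmod (h F G a) * (C * (x `^ gam / a%:R `^ beta)) by ring.
  apply: ler_wpM2l; first exact: cmod_ge0.
  apply: le_trans; first exact: (hC _ xa1).
  apply: ler_wpM2l => //.
  apply: (@le_trans _ _ ((x / a%:R) `^ gam)).
    by apply: ler_powR => //; rewrite /gam le_max lexx.
  rewrite powRM ?invr_ge0 ?ler0n // powR_invb ?ler0n // ler_wpM2l ?powR_ge0 //.
  rewrite lef_pV2 ?posrE ?powR_gt0 //; apply: ler_powR; first by rewrite ler1n.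
  by rewrite /gam le_max lexx orbT.
rewrite -mulr_sumr [X in _ <= X]mulrAC ler_wpM2l ?mulr_ge0 ?powR_ge0 //.
Qed.
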